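(* For each $\sigma\ge 1$, let $K_\sigma$ be any string of the form $K_\sigma=s_{\sigma-1}^{k_{\sigma-1}}\cdots s_1^{k_1}s_0^{k_0}$, where $s_0<s_1<\dots<s_{\sigma-1}$ are all the letters of an ordered alphabet $\Sigma_\sigma$ of size $\sigma$ and all $k_i>1$ are integers. Then $\chi(K_\sigma)/r(K_\sigma)\to 2$ as $\sigma\to\infty$.
   Context: Strings are $0$-indexed. $\$$ is an end-marker not in the alphabet, smaller than every letter, appended once at the end. $r(K)$ is the number of runs (maximal blocks of one repeated letter) in $\operatorname{BWT}(K\$)$, the last column of the matrix of lexicographically sorted cyclic rotations of $K\$$. For a string $v$, a substring $x$ (possibly empty) is right-maximal if $xa$ and $xb$ are substrings of $v$ for two distinct letters $a\neq b$; such words $xa$ are right-extensions of $v$. A set $S$ of positions of $v$ is suffixient if every right-extension of $v$ is a suffix of $v[0..j]$ for some $j\in S$. $\chi(K)$ is the minimum size of a suffixient set for $K\$$. *)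

(* Defs.v *)
From mathcomp Require Import all_boot all_order all_algebra.
Set Implicit Arguments. Unset Strict Implicit. Unset Printing Implicit Defensive.
Import Order.TTheory GRing.Theory Num.Theory.

(* Letters are natural numbers (ordered by <); the end-marker $ is [None],
   and strings with the end-marker are [seq (option nat)], letter a being [Some a]. *)
Definition sym := option nat.

Definition sym_lt (x y : sym) : bool :=
  match x, y with
  | None, None => false
  | None, Some _ => true
  | Some _, None => false
  | Some a, Some b => (a < b)%N
  end.

Fixpoint lex_le (u v : seq sym) : bool :=
  match u, v with
  | [::], _ => true
  | _ :: _, [::] => false
  | x :: u', y :: v' => sym_lt x y || ((x == y) && lex_le u' v')
  end.

Definition with_end (K : seq nat) : seq sym := rcons (map Some K) None.

Definition BWT (w : seq sym) : seq sym :=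
  map (fun t => last None t) (sort lex_le [seq rot i w | i <- iota 0 (size w)]).

Definition runs (s : seq sym) : nat :=
  match s with
  | [::] => 0
  | x :: s' => (count id (pairmap (fun a b => a != b) x s')).+1
  end.

Definition r_of (K : seq nat) : nat := runs (BWT (with_end K)).

Definition substrings (v : seq sym) : seq (seq sym) :=
  [seq take l (drop i v) | i <- iota 0 (size v).+1, l <- iota 0 (size v).+1].

Definition right_maximal (v x : seq sym) : bool :=
  has (fun a => has (fun b =>
     (a != b) && infix (rcons x a) v && infix (rcons x b) v) v) v.

Definition right_extension (v y : seq sym) : bool :=
  match y with
  | [::] => false
  | b :: y' => infix y v && right_maximal v (belast b y')
  end.

Definition suffixient (v : seq sym) (S : {set 'I_(size v)}) : bool :=
  all (fun y => right_extension v y ==>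
                [exists j in S, suffix y (take (nat_of_ord j).+1 v)])
      (substrings v).

(* minimum size of a suffixient set (the full set of positions is always suffixient) *)
Definition chi_of (K : seq nat) : nat :=
  let v := with_end K in
  \big[minn/size v]_(S : {set 'I_(size v)} | suffixient S) #|S|.

Definition Kstring (sigma : nat) (s k : nat -> nat) : seq nat :=
  flatten [seq nseq (k (sigma.-1 - j)) (s (sigma.-1 - j)) | j <- iota 0 sigma].

(* Main.v *)
Require Import Defs.
From mathcomp Require Import all_boot all_order all_algebra.
From mathcomp Require Import zify ring lra.
Set Implicit Arguments. Unset Strict Implicit. Unset Printing Implicit Defensive.

Definition symge (x y : sym) : bool := ~~ sym_lt x y.

Lemma sym_lt_irr x : sym_lt x x = false.
Proof. by case: x => [a|] //=; rewrite ltnn. Qed.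

Lemma sym_lt_trans x y z : sym_lt x y -> sym_lt y z -> sym_lt x z.
Proof. case: x y z => [a|] [b|] [c|] //=; lia. Qed.

Lemma sym_lt_total x y : x != y -> sym_lt x y || sym_lt y x.
Proof. case: x y => [a|] [b|] //=. move=> H. have : a != b by apply: contra H => /eqP ->. lia. Qed.

Lemma symge_anti x y : symge x y -> symge y x -> x = y.
Proof.
rewrite /symge => H1 H2; apply/eqP/negPn/negP => /sym_lt_total.
by rewrite (negbTE H1) (negbTE H2).
Qed.

Lemma symge_trans : transitive symge.
Proof.
move=> y x z; rewrite /symge => H1 H2; apply/negP => H.
case: (eqVneq x y) => [E|]; first by subst; rewrite H in H2.
move/sym_lt_total; rewrite (negbTE H1) /= => Hyx.
by rewrite (sym_lt_trans Hyx H) in H2.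
Qed.

Lemma symge_refl : reflexive symge.
Proof. by move=> x; rewrite /symge sym_lt_irr. Qed.

Lemma lex_trans : transitive lex_le.
Proof.
move=> v u; elim: u v => [|x u IH] [|y v] [|z w] //=.
case/orP=> [Hxy|/andP[/eqP <- Huv]]; case/orP=> [Hyz|/andP[/eqP <- Hvw]].
- by rewrite (sym_lt_trans Hxy Hyz).
- by rewrite Hxy.
- by rewrite Hyz.
- by rewrite eqxx (IH _ _ Huv Hvw) orbT.
Qed.

Lemma lex_anti : antisymmetric lex_le.
Proof.
elim=> [|x u IH] [|y v] //=; case/andP.
case/orP=> [Hxy|/andP[/eqP <- Huv]]; case/orP=> [Hyx|/andP[/eqP E Hvu]].
- by have := sym_lt_trans Hxy Hyx; rewrite sym_lt_irr.
- by subst; rewrite sym_lt_irr in Hxy.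
- by rewrite sym_lt_irr in Hyx.
- by rewrite (IH v) // Huv Hvu.
Qed.

Lemma lex_total : total lex_le.
Proof.
elim=> [|x u IH] [|y v] //=.
case: (eqVneq x y) => [<-|/sym_lt_total].
- by rewrite sym_lt_irr /=; apply: IH.
- by case/orP => ->; rewrite ?orbT.
Qed.

Lemma key_lex (u : seq sym) : None \notin u -> sorted symge u ->
  forall i j X Y, i < j <= size u ->
  lex_le (drop j (rcons u None) ++ X) (drop i (rcons u None) ++ Y).
Proof.
elim: u => [|x u IH] //=.
  by move=> _ _ i j X Y; lia.
rewrite in_cons negb_or => /andP[Hx Hu] Hs i j X Y Hij.
have Hsu : sorted symge u by apply: path_sorted Hs.
have Hall : all (symge x) u by apply: order_path_min Hs; apply: symge_trans.
case: i Hij => [|i] Hij; last first.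
  case: j Hij => [|j] Hij; first lia.
  by rewrite /= IH //; lia.
case: j Hij => [|j] Hij; first lia.
rewrite /=.
case: (ltnP j (size u)) => Hj.
  rewrite (drop_nth None); last by rewrite size_rcons ltnS ltnW.
  rewrite nth_rcons Hj /=.
  have Hm : nth None u j \in u by apply: mem_nth.
  have := allP Hall _ Hm; rewrite /symge => Hge.
  case: (eqVneq (nth None u j) x) => [E|Ne].
    rewrite E sym_lt_irr /=.
    have := IH Hu Hsu 0 j.+1 X Y; rewrite drop0 => -> //; lia.

  by have := sym_lt_total Ne; rewrite (negbTE Hge) orbF => ->.
have -> : j = size u by lia.
rewrite drop_rcons // drop_size /=.
by move: Hx; case: (x).
Qed.

Lemma sorted_map_iota (T : Type) (r : rel T) (f : nat -> T) m n :
  (forall i, m <= i -> i.+1 < m + n -> r (f i) (f i.+1)) ->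
  sorted r (map f (iota m n)).
Proof.
elim: n m => [|n IH] m H //=.
case: n IH H => [|n] IH H //=.
have := IH m.+1 => /=; move=> ->; last by move=> i Hi Hi2; apply: H; lia.
by rewrite H //; lia.
Qed.

Lemma BWT_sorted (u : seq sym) : None \notin u -> sorted symge u ->
  BWT (rcons u None) = rcons (rev u) None.
Proof.
move=> Hn Hs; rewrite /BWT.
set v := rcons u None.
have Hv : size v = (size u).+1 by rewrite size_rcons.
set L := [seq rot p v | p <- rev (iota 0 (size v))].
have -> : sort lex_le [seq rot i v | i <- iota 0 (size v)] = L.
  apply: (sorted_eq lex_trans lex_anti).
  - exact: sort_sorted lex_total _.
  - rewrite /L map_rev rev_sorted.
    apply: sorted_map_iota => i _ Hi.
    rewrite /rot; apply: key_lex => //; lia.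
  - by rewrite perm_sort /L map_rev perm_sym perm_rev perm_refl.
rewrite /L map_rev map_rev -map_comp.
have -> : [seq (last None \o rot^~ v) i | i <- iota 0 (size v)] = None :: u.
  apply: (@eq_from_nth _ None); first by rewrite size_map size_iota Hv.
  move=> i; rewrite size_map size_iota => Hi.
  rewrite (nth_map 0) ?size_iota // nth_iota // add0n /=.
  case: i Hi => [|i] Hi; first by rewrite rot0 /v last_rcons.
  rewrite /rot last_cat (take_nth None) ?last_rcons; last by apply: ltnW.
  by rewrite /v nth_rcons /= ifT //; move: Hi; rewrite Hv.
by rewrite rev_cons.
Qed.

Ltac fixsize :=
  repeat match goal with
  | |- context [@size (Equality.sort ?E) ?x] =>
      change (@size (Equality.sort E) x) with (@size sym x)
  | H : context [@size (Equality.sort ?E) ?x] |- _ =>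
      change (@size (Equality.sort E) x) with (@size sym x) in H
  end.
Ltac slia := fixsize; lia.
Ltac keep T := lazymatch T with
  | is_true (leq _ _) => idtac
  | @eq ?A _ _ => first [unify A nat | unify A bool]
  end.
Ltac prune := repeat match goal with
  | H : ?T |- _ =>
     lazymatch type of T with
     | Prop => tryif keep T then fail else clear H
     end
  end.
Ltac plia := prune; slia.

Section Gen.
Variable v : seq sym.
Notation n := (size v).
Notation vn := (nth None v).

Definition D i := (vn (i)) != (vn (i.+1)).
Definition inA (p : nat) := (p.+1 < n) && D p.
Definition inB (p : nat) := (0 < p) && ((vn (p.-1)) != (vn (p))).
Definition Rset : {set 'I_n} := [set p : 'I_n | inA p || inB p].

Hypothesis V1 : sorted symge v.
Hypothesis V2 : (1 < n) && D (n.-2).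
Hypothesis V3 : forall p, p.+1 < n -> D p -> (0 < p) && ((vn (p.-1)) == (vn (p))).

Lemma ge_nth i j : i <= j -> j < n -> symge (vn (i)) (vn (j)).
Proof.
move=> Hij Hj.
apply: (sorted_leq_nth symge_trans symge_refl None V1) => //; rewrite inE; plia.
Qed.

Lemma U p j : p.+1 < n -> D p -> j < n -> (vn (p)) = (vn (j)) -> j <= p.
Proof.
move=> Hp HD Hj E; rewrite leqNgt; apply/negP => Hpj.
have H1 := ge_nth (leqnSn p) Hp.
have H2 : symge (vn (p.+1)) (vn (j)) by apply: ge_nth.
rewrite -E in H2.
by move: HD; rewrite /D (symge_anti H1 H2) eqxx.
Qed.

Lemma blockc m t p : m <= t -> t <= p -> p < n -> (vn (m)) = (vn (p)) -> (vn (t)) = (vn (p)).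
Proof.
move=> H1 H2 H3 E.
apply: symge_anti; first by apply: ge_nth.
rewrite -E; apply: ge_nth => //; plia.
Qed.

Lemma infix_nth (y : seq sym) i :
  (forall t, t < size y -> (vn (i + t)) = nth None y t) -> i + size y <= n -> infix y v.
Proof.
move=> H Hs.
have -> : y = take (size y) (drop i v).
  apply: (@eq_from_nth sym None).
    by rewrite size_takel // size_drop; plia.
  by move=> t Ht; rewrite nth_take // nth_drop H.
apply/infixP; exists (take i v), (drop (size y) (drop i v)).
by rewrite !cat_take_drop.
Qed.

Lemma occ_nth (w y z : seq sym) t : v = w ++ y ++ z -> t < size y ->
  (vn (size w + t)) = nth None y t.
Proof. by move=> -> Ht; rewrite nth_cat ltnNge leq_addr /= addKn nth_cat Ht. Qed.

Lemma occ_rcons (w x z : seq sym) a t : v = w ++ rcons x a ++ z -> t < size x ->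
  vn (size w + t) = nth None x t.
Proof.
move=> E Ht; rewrite (occ_nth (t:=t) E) ?size_rcons; last by apply: leqW.
by rewrite nth_rcons Ht.
Qed.

Lemma occ_last (w x z : seq sym) a : v = w ++ rcons x a ++ z ->
  vn (size w + size x) = a.
Proof.
move=> E; rewrite (occ_nth (t:=size x) E) ?size_rcons //.
by rewrite nth_rcons ltnn eqxx.
Qed.

Lemma suffix_nth (y : seq sym) j : suffix y (take j.+1 v) -> j < n ->
  size y <= j.+1 /\ forall t, t < size y -> (vn (j.+1 - size y + t)) = nth None y t.
Proof.
move=> /suffixP[w Hw] Hj.
have Hs : size w + size y = j.+1 by rewrite -size_cat -Hw size_takel.
split; first plia.
move=> t Ht.
have -> : j.+1 - size y = size w by plia.
rewrite -(nth_take _ (_ : size w + t < j.+1)); last plia.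
by rewrite Hw nth_cat ltnNge leq_addr /= addKn.
Qed.

Lemma infix_subs y : infix y v -> y \in substrings v.
Proof.
move=> /infixP[w [z E]].
apply/allpairsPdep; exists (size w), (size y); split.
- by rewrite mem_iota E !size_cat; plia.
- by rewrite mem_iota E !size_cat; plia.
- by rewrite E drop_size_cat // take_size_cat.
Qed.

Lemma rm_intro x a b : a != b -> infix (rcons x a) v -> infix (rcons x b) v ->
  right_maximal v x.
Proof.
move=> Hab Ha Hb; apply/hasP; exists a.
  by apply: (mem_infix Ha); rewrite mem_rcons mem_head.
apply/hasP; exists b.
  by apply: (mem_infix Hb); rewrite mem_rcons mem_head.
by rewrite Hab Ha Hb.
Qed.

Lemma ext_intro x c : infix (rcons x c) v -> right_maximal v x ->
  right_extension v (rcons x c).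
Proof.
case E: (rcons x c) => [|b y'] //=; first by case: x E.
move=> -> /=.
have := lastI b y'; rewrite -E => /rcons_inj[<- _] //.
Qed.


Lemma idx_min c t : t < n -> vn t = c -> index c v <= t.
Proof.
move=> Ht Hc; rewrite leqNgt; apply/negP => H.
have := @before_find _ None (pred1 c) v t H.
by rewrite /= Hc eqxx.
Qed.

Lemma nth_rcons_nseq L (c e : sym) t : t <= L ->
  nth None (rcons (nseq L c) e) t = if t < L then c else e.
Proof.
move=> Ht; rewrite nth_rcons size_nseq nth_nseq.
by case: ltnP => // H; have -> : t == L by apply/eqP; plia.
Qed.

Lemma suff_sub S : suffixient S -> Rset \subset S.
Proof.
move=> HS.
have key : forall y, infix y v -> right_extension v y ->
    exists2 j : 'I_n, j \in S & suffix y (take j.+1 v).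
  move=> y Hi He.
  move/allP: HS => /(_ y (infix_subs Hi)) /implyP /(_ He) /existsP [j /andP[Hj Hs]].
  by exists j.
apply/subsetP => p; rewrite inE => /orP[HA|HB].
- move/andP: HA => [Hp HD].
  have /andP[Hp0 /eqP Hpm] := V3 Hp HD.
  set c := vn p.
  have cin : c \in v by apply: mem_nth; plia.
  set m := index c v.
  have Hm : m <= p.-1 by apply: idx_min => //; plia.
  have Hvm : vn m = c by apply: nth_index.
  have Hall : forall t, m <= t -> t <= p -> vn t = c.
    move=> t H1 H2; apply: (@blockc m t p) => //; plia.
  set L := p - m.
  have Hi1 : infix (rcons (nseq L c) c) v.
    apply: (@infix_nth _ m).
      move=> t; rewrite size_rcons size_nseq => Ht.
      rewrite nth_rcons_nseq; last plia.
      by case: ifP => _; apply: Hall; plia.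
    by rewrite size_rcons size_nseq; plia.
  have Hi2 : infix (rcons (nseq L c) (vn p.+1)) v.
    apply: (@infix_nth _ m.+1).
      move=> t; rewrite size_rcons size_nseq => Ht.
      rewrite nth_rcons_nseq; last plia.
      case: ifP => H; first by apply: Hall; plia.
      by congr (nth _ _ _); plia.
    by rewrite size_rcons size_nseq; plia.
  have Hext : right_extension v (rcons (nseq L c) c).
    apply: ext_intro => //.
    by apply: (rm_intro (a:=c) (b:=vn p.+1)).
  have [j Hj Hsj] := key _ Hi1 Hext.
  have [Hsz Hn] := suffix_nth Hsj (ltn_ord j).
  move: Hsz Hn; rewrite size_rcons size_nseq => Hsz Hn.
  have H0 := Hn 0 (ltn0Sn _).
  have HL := Hn L (ltnSn _).
  rewrite nth_rcons_nseq // ltnn in HL.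
  rewrite nth_rcons_nseq // ifT ?addn0 in H0; last plia.
  have Hjp : j <= p.
    have Hjn := ltn_ord j.
    apply: U => //.
    by rewrite -/c -HL; congr (nth _ _ _); plia.
  have Hmj : m <= j.+1 - L.+1 by apply: idx_min => //; have := ltn_ord j; plia.
  by have -> : p = j by apply: val_inj => /=; plia.
- move/andP: HB => [Hp0 Hne].
  have Hp1 : (p.-1).+1 < n by rewrite prednK.
  have HD : D p.-1 by rewrite /D prednK.
  have /andP[Hp2 /eqP Hpm] := V3 Hp1 HD.
  set d := vn p.-1; set c := vn p.
  have Hi1 : infix (rcons [:: d] d) v.
    apply: (@infix_nth _ p.-2).
      move=> [|[|t]] //= _; first by rewrite addn0 Hpm.
      by rewrite addn1; congr (nth _ _ _); plia.
    by rewrite /=; plia.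
  have Hi2 : infix (rcons [:: d] c) v.
    apply: (@infix_nth _ p.-1).
      move=> [|[|t]] //= _; first by rewrite addn0.
      by rewrite addn1 prednK.
    by rewrite /=; plia.
  have Hext : right_extension v (rcons [:: d] c).
    by apply: ext_intro => //; apply: (rm_intro (a:=d) (b:=c)).
  have [j Hj Hsj] := key _ Hi2 Hext.
  have [Hsz Hn] := suffix_nth Hsj (ltn_ord j).
  move: Hsz Hn => /= Hsz Hn.
  have H0 := Hn 0 isT; have H1 := Hn 1 isT.
  rewrite /= in H0 H1.
  have E0 : j.+1 - 2 + 0 = j.-1 by plia.
  have E1 : j.+1 - 2 + 1 = j by plia.
  rewrite E0 in H0; rewrite E1 in H1.
  have Hj1 : j.-1 <= p.-1.
    apply: U => //; first by have := ltn_ord j; plia.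
  have Hj2 : p.-1 <= j.-1.
    have Hjn := ltn_ord j.
    apply: U => //.
    - have Hj0 : 0 < j by plia.
      by rewrite prednK //; plia.
    - have Hj0 : 0 < j by plia.
      by rewrite /D prednK // H0 H1.
    - plia.
  by have -> : p = j by apply: val_inj => /=; plia.
Qed.


Lemma rcons_nseq (m : nat) (e : sym) : rcons (nseq m e) e = nseq m.+1 e.
Proof. by elim: m => //= m ->. Qed.

Lemma walk m e : forall k q, n - q = k -> q < n ->
  suffix (nseq m.+1 e) (take q.+1 v) -> vn q = e ->
  [exists j in Rset, suffix (nseq m.+1 e) (take j.+1 v)].
Proof.
elim=> [|k IH] q Hk Hq Hs He; first plia.
case: (boolP (inA q || inB q)) => HR.
  by apply/existsP; exists (Ordinal Hq); rewrite inE HR Hs.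
have Hq1 : q.+1 < n.
  rewrite ltn_neqAle Hq andbT; apply/negP => /eqP Eq.
  move/andP: V2 => [Hn1 HD2].
  have Eq' : q = (size v).-2.+1 by plia.
  move: HR; rewrite Eq' /inB /=; move: HD2; rewrite /D => ->.
  by rewrite orbT.
move: HR; rewrite negb_or /inA Hq1 /= => /andP[HD _].
move: HD; rewrite /D negbK => /eqP HD.
apply: (IH q.+1) => //; first plia.
rewrite (take_nth None) // -HD He -rcons_nseq suffix_rcons eqxx /=.
apply: (suffix_trans _ Hs).
  exact: (suffix_suffix [:: e] _).
by rewrite -HD.
Qed.

Lemma const_seq (x : seq sym) : (forall i, i.+1 < size x -> nth None x i = nth None x i.+1) ->
  forall d i, i + d < size x -> nth None x i = nth None x (i + d).
Proof.
move=> H; elim=> [|d IH] i Hi; first by rewrite addn0.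
rewrite (IH i); last plia.
by rewrite addnS; apply: H; plia.
Qed.

Lemma R_suff : suffixient Rset.
Proof.
apply/allP => y _; apply/implyP.
case: y => [|b y'] //= /andP[Hinf Hrm].
have Ey : b :: y' = rcons (belast b y') (last b y') := lastI b y'.
move: Hrm Hinf; rewrite Ey; set x := belast b y'; set e := last b y' => Hrm Hinf.
move/infixP: Hinf => [w [z Ev]].
set q := size w + size x.
have Hq : q < n by rewrite Ev !size_cat size_rcons /q; plia.
have Hsq : suffix (rcons x e) (take q.+1 v).
  rewrite Ev catA take_size_cat; first by apply: suffix_suffix.
  by rewrite size_cat size_rcons /q addnS.
have Hvq : vn q = e.
  by rewrite /q (occ_last Ev).
case: (boolP (inA q || inB q)) => HR.
  by apply/existsP; exists (Ordinal Hq); rewrite inE HR Hsq.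
have Hadj : forall i, i.+1 < size x -> nth None x i = nth None x i.+1.
  move=> i Hi; apply/eqP/negPn/negP => Hne.
  move/hasP: Hrm => [a1 _ /hasP[a2 _ /andP[/andP[Ha12 Hi1] Hi2]]].
  move/infixP: Hi1 => [w1 [z1 E1]]; move/infixP: Hi2 => [w2 [z2 E2]].
  have Hix : i < size x by plia.
  have P1a := occ_rcons E1 Hix; have P1b := occ_rcons E1 Hi.
  have P2a := occ_rcons E2 Hix; have P2b := occ_rcons E2 Hi.
  have Hn1 : size w1 + i.+1 < n by rewrite E1 !size_cat size_rcons; plia.
  have Hn2 : size w2 + i.+1 < n by rewrite E2 !size_cat size_rcons; plia.
  have HD1 : D (size w1 + i) by rewrite /D -addnS P1a P1b.
  have HD2 : D (size w2 + i) by rewrite /D -addnS P2a P2b.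
  have L1 : size w1 + i <= size w2 + i.
    apply: U => //; first by rewrite -addnS.
    - plia.
    - by rewrite P1a P2a.
  have L2 : size w2 + i <= size w1 + i.
    apply: U => //; first by rewrite -addnS.
    - plia.
    - by rewrite P1a P2a.
  have Ew : size w1 = size w2 by plia.
  have A1 := occ_last E1; have A2 := occ_last E2.
  by move: Ha12; rewrite -A1 -A2 Ew eqxx.
have Hcst := const_seq Hadj.
have Hy : rcons x e = nseq (size x).+1 e.
  apply: (@eq_from_nth sym None); first by rewrite size_rcons size_nseq.
  move=> i; rewrite size_rcons => Hi.
  rewrite nth_nseq Hi nth_rcons.
  case: ltnP => Hix; last by (have -> : i = size x by plia); rewrite eqxx.
  have Hx0 : 0 < size x by plia.
  rewrite (Hcst (size x - i.+1) i); last plia.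
  have -> : i + (size x - i.+1) = (size x).-1 by plia.
  move: HR; rewrite negb_or => /andP[_]; rewrite /inB negb_and negbK.
  have Hq0 : 0 < q by rewrite /q; plia.
  rewrite Hq0 /= => /eqP Hqq.
  rewrite -Hvq -Hqq.
  have Hx1 : (size x).-1 < size x by plia.
  rewrite -(occ_rcons Ev Hx1).
  by congr (nth _ _ _); rewrite /q; plia.
rewrite Hy; apply: (walk (k := n - q)) => //.
by rewrite -Hy.
Qed.

End Gen.

Lemma card_count n (P : pred nat) : #|[set p : 'I_n | P p]| = count P (iota 0 n).
Proof.
rewrite cardsE -sum1_card.
rewrite (eq_bigl (fun i : 'I_n => P i)) //.
by rewrite -(big_mkord P (fun _ => 1)) sum1_count /index_iota subn0.
Qed.

Lemma iota_succ m k : iota m.+1 k = map S (iota m k).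
Proof. by elim: k m => //= k IH m; rewrite IH. Qed.

Lemma Rset_card v : (1 < size v) && D v (size v).-2 ->
  (forall p, p.+1 < size v -> D v p -> (0 < p) && (nth None v p.-1 == nth None v p)) ->
  #|Rset v| = 2 * count (D v) (iota 0 (size v).-1).
Proof.
move=> /andP[Hn _] V3.
rewrite /Rset (@card_count _ (fun p => inA v p || inB v p)).
have := count_predUI (inA v) (inB v) (iota 0 (size v)).
rewrite (eq_count (a1 := predI _ _) (a2 := pred0)); last first.
  move=> p /=; apply/negP => /andP[/andP[Hp HD] /andP[_ Hne]].
  by have /andP[_ E] := V3 p Hp HD; rewrite E in Hne.
rewrite count_pred0 addn0 => ->.
have En : size v = (size v).-1.+1 by lia.
have HA : count (inA v) (iota 0 (size v)) = count (D v) (iota 0 (size v).-1).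
  rewrite {1}En -addn1 iotaD count_cat /= add0n.
  have -> : inA v (size v).-1 = false by rewrite /inA -En ltnn.
  rewrite /= !addn0; apply: eq_in_count => p; rewrite mem_iota /inA => /andP[_ Hp].
  by have -> : p.+1 < size v by lia.
have HB : count (inB v) (iota 0 (size v)) = count (D v) (iota 0 (size v).-1).
  rewrite {1}En /= iota_succ count_map /=.
  by apply: eq_count => p.
rewrite HA HB; lia.
Qed.

Lemma bigmin_le (T : eqType) (r : seq T) (P : pred T) (F : T -> nat) x0 i :
  i \in r -> P i -> \big[minn/x0]_(j <- r | P j) F j <= F i.
Proof.
elim: r => [|y r IH] //; rewrite in_cons big_cons => /orP[/eqP <-|Hi] HP.
  by rewrite HP geq_minl.
case: (P y); last exact: IH.
by rewrite geq_min IH ?orbT.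
Qed.

Lemma chi_gen v : sorted symge v -> (1 < size v) && D v (size v).-2 ->
  (forall p, p.+1 < size v -> D v p -> (0 < p) && (nth None v p.-1 == nth None v p)) ->
  \big[minn/size v]_(S : {set 'I_(size v)} | suffixient S) #|S| = #|Rset v|.
Proof.
move=> V1 V2 V3.
apply/eqP; rewrite eqn_leq; apply/andP; split.
  apply: bigmin_le; first exact: mem_index_enum.
  exact: R_suff.
apply: (big_ind (fun m => #|Rset v| <= m)).
- by have := max_card (Rset v); rewrite card_ord.
- by move=> a b Ha Hb; rewrite leq_min Ha Hb.
- move=> S HS; apply: subset_leq_card; exact: suff_sub.
Qed.

Lemma pairmap_count (x : sym) t :
  count id (pairmap (fun a b => a != b) x t) = count (D (x :: t)) (iota 0 (size t)).
Proof.
elim: t x => [|y t IH] x //=.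
by rewrite IH iota_succ count_map.
Qed.

Lemma runs_count x t : runs (x :: t) = (count (D (x :: t)) (iota 0 (size t))).+1.
Proof. by rewrite /runs pairmap_count. Qed.

Definition chg (x : sym) (t : seq sym) := count id (pairmap (fun a b => a != b) x t).

Lemma chg_cat x s1 s2 : chg x (s1 ++ s2) = chg x s1 + chg (last x s1) s2.
Proof. by rewrite /chg pairmap_cat count_cat. Qed.

Lemma chg_nseq x k (c : sym) : 0 < k -> chg x (nseq k c) = (x != c).
Proof.
case: k => // k _; rewrite /chg /=.
suff -> : count id (pairmap (fun a b => a != b) c (nseq k c)) = 0 by rewrite addn0.
by elim: k => //= k ->; rewrite eqxx.
Qed.

Lemma last_nseq x k (c : sym) : 0 < k -> last x (nseq k c) = c.
Proof. by case: k => // k _; elim: k => //= k. Qed.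

Lemma runs_chg y t : runs (y :: t) = (chg y (y :: t)).+1.
Proof. by rewrite /runs /chg /= eqxx. Qed.

Lemma path_nseq x k (c : sym) : symge x c -> path symge x (nseq k c).
Proof. by elim: k x => //= k IH x H; rewrite H IH // symge_refl. Qed.

Lemma KstringS n (s k : nat -> nat) :
  Kstring n.+1 s k = nseq (k n) (s n) ++ Kstring n s k.
Proof.
rewrite /Kstring /= subn0; congr (_ ++ _).
have -> : iota 1 n = map S (iota 0 n) by elim: n {s k} 0 => //= n IH m; rewrite IH.
rewrite -map_comp; congr flatten; apply: eq_map => j /=.
by have -> : n - j.+1 = n.-1 - j by lia.
Qed.

Section K.
Variables (s k : nat -> nat) (sig : nat).
Hypothesis Hs : forall i j, i < j < sig -> s i < s j.
Hypothesis Hk : forall i, i < sig -> 1 < k i.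

Definition vK n := with_end (Kstring n s k).

Lemma vKS n : vK n.+1 = nseq (k n) (Some (s n)) ++ vK n.
Proof. by rewrite /vK /with_end KstringS map_cat map_nseq rcons_cat. Qed.

Lemma vK_path n : n <= sig -> forall x, (n == 0) || symge x (Some (s n.-1)) ->
  path symge x (vK n).
Proof.
elim: n => [|n IH] Hn x Hx; first by rewrite /vK /with_end /= andbT /symge; case: x {Hx}.
have Hkn : 0 < k n by have := Hk (i:=n); lia.
rewrite vKS cat_path path_nseq //= last_nseq //.
apply: IH; first lia.
case: n Hn Hkn Hx => //= n Hn _ _.
by rewrite /symge /= -leqNgt; apply: ltnW; apply: Hs; lia.
Qed.

Lemma vK_sorted n : n <= sig -> sorted symge (vK n).
Proof.
case: n => [|n] Hn; first by [].
have := vK_path Hn (x := Some (s n)); rewrite /= symge_refl => /(_ isT).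
by case: (vK n.+1) => //= y t /andP[_ H].
Qed.

Lemma vK_size n : size (vK n) = (size (Kstring n s k)).+1.
Proof. by rewrite /vK /with_end size_rcons size_map. Qed.

Lemma vK_V3 n : n <= sig -> forall p, p.+1 < size (vK n) -> D (vK n) p ->
  (0 < p) && (nth None (vK n) p.-1 == nth None (vK n) p).
Proof.
elim: n => [|n IH] Hn p Hp HD; first by move: Hp; rewrite /vK /with_end /=.
have Hkn : 1 < k n by apply: Hk; lia.
move: Hp HD; rewrite /D vKS !nth_cat !size_nseq !nth_nseq size_cat size_nseq => Hp HD.
case: (ltnP p.+1 (k n)) => H1.
  have H1p : p < k n by lia.
  by rewrite H1 H1p eqxx in HD.
case: (ltnP p (k n)) => H2.
  have Ep : p = (k n).-1 by lia.
  rewrite Ep; apply/andP; split; first lia.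
  by rewrite ifT ?ifT //; lia.
have E1 : (p < k n) = false by apply/negbTE; rewrite -leqNgt.
have E2 : (p.+1 < k n) = false by apply/negbTE; rewrite -leqNgt; lia.
rewrite E1 E2 subSn // in HD.
have Hq : (p - k n).+1 < size (vK n) by lia.
have /andP[Hq0 /eqP Hq1] := IH (ltnW Hn) _ Hq HD.
apply/andP; split; first lia.
have E3 : (p.-1 < k n) = false by apply/negbTE; rewrite -leqNgt; lia.
rewrite E3 -Hq1; apply/eqP; congr (nth _ _ _); lia.
Qed.


Lemma vK_head n : n < sig -> head None (vK n.+1) = Some (s n).
Proof.
move=> Hn; rewrite vKS; have : 0 < k n by have := Hk Hn; lia.
by case: (k n).
Qed.

Lemma vK_chg n : n <= sig -> forall x, chg x (vK n) = (x != head None (vK n)) + n.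
Proof.
elim: n => [|n IH] Hn x; first by rewrite /chg /vK /with_end /= addn0.
have Hkn : 0 < k n by have := Hk (i:=n); lia.
rewrite vK_head // vKS chg_cat chg_nseq // last_nseq // IH; last lia.
suff -> : (Some (s n) != head None (vK n)) = true by rewrite /nat_of_bool add1n.
case: n IH Hn Hkn => [|n] IH Hn Hkn //.
rewrite vK_head; last lia.
apply/negP => /eqP [E]; have := Hs (i:=n) (j:=n.+1); rewrite E ltnn; lia.
Qed.

Lemma vK_runs : runs (vK sig) = sig.+1.
Proof.
have := vK_chg (leqnn sig).
case E: (vK sig) => [|y t]; first by move: (vK_size sig); rewrite E.
by rewrite runs_chg => ->; rewrite /= eqxx.
Qed.

Definition ru n := rev (map Some (Kstring n s k)).

Lemma ru_S n : ru n.+1 = ru n ++ nseq (k n) (Some (s n)).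
Proof. by rewrite /ru KstringS map_cat rev_cat map_nseq rev_nseq. Qed.

Lemma ru_props n : 0 < n <= sig ->
  [/\ head None (ru n) = Some (s 0), forall x, last x (ru n) = Some (s n.-1)
    & forall x, chg x (ru n) = (x != Some (s 0)) + n.-1].
Proof.
elim: n => [|m IH] // /andP[_ Hm].
have Hkm : 0 < k m by have := Hk (i:=m); lia.
case: m IH Hm Hkm => [|m] IH Hm Hkm.
  rewrite ru_S /ru /Kstring /=; split.
  - by case: (k 0) Hkm.
  - by move=> x; rewrite last_nseq.
  - by move=> x; rewrite chg_nseq // addn0.
have [H1 H2 H3] := IH (ltnW Hm).
rewrite ru_S; split.
- by case: (ru m.+1) H1.
- by move=> x; rewrite last_cat last_nseq.
- move=> x; rewrite chg_cat H3 H2 chg_nseq //=.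
  suff -> : (Some (s m) != Some (s m.+1)) = true by rewrite /nat_of_bool addn1 addnS.
  apply/negP => /eqP [E]; have := Hs (i:=m) (j:=m.+1); rewrite E ltnn; lia.
Qed.

Lemma BWT_runs : 0 < sig -> runs (rcons (ru sig) None) = sig.+1.
Proof.
move=> H0.
have [H1 H2 H3] := ru_props (n:=sig) (introT andP (conj H0 (leqnn sig))).
case E: (ru sig) H1 H2 H3 => [|y t] //= [Ey] H2 H3.
have Hc : chg y t = sig.-1.
  by have := H3 y; rewrite /chg /= eqxx Ey eqxx.
have Hl : last y t = Some (s sig.-1) := H2 y.
rewrite -/(chg y (rcons t None)) -cats1 chg_cat Hc Hl /chg /=.
lia.
Qed.

End K.

Import Order.TTheory GRing.Theory Num.Theory.

Section Main.
Variables (s k : nat -> nat) (sig : nat).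
Hypothesis Hs : forall i j, (i < j < sig)%N -> (s i < s j)%N.
Hypothesis Hk : forall i, (i < sig)%N -> (1 < k i)%N.
Hypothesis H0 : (0 < sig)%N.

Lemma vK_eq : vK s k sig = rcons (map Some (Kstring sig s k)) None.
Proof. by []. Qed.

Lemma sizeK : (0 < size (Kstring sig s k))%N.
Proof.
case: sig Hk H0 => // m Hk' _.
rewrite KstringS size_cat size_nseq; have := Hk' m (ltnSn m); lia.
Qed.

Lemma r_K : r_of (Kstring sig s k) = sig.+1.
Proof.
rewrite /r_of /with_end BWT_sorted.
- by rewrite -map_rev; have := BWT_runs Hs Hk H0; rewrite /ru map_rev.
- by apply/mapP => -[x _].
- have := vK_sorted Hs Hk (leqnn sig); rewrite vK_eq -cats1.
  by case/cat_sorted2.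
Qed.

Lemma chi_K : chi_of (Kstring sig s k) = (2 * sig)%N.
Proof.
rewrite /chi_of -/(with_end _) -/(vK s k sig).
have V1 := vK_sorted Hs Hk (leqnn sig).
have V3 := @vK_V3 s k sig Hk sig (leqnn sig).
have HsK := sizeK.
have V2 : (1 < size (vK s k sig)) && D (vK s k sig) (size (vK s k sig)).-2.
  rewrite vK_size; apply/andP; split; first lia.
  rewrite /D vK_eq !nth_rcons !size_map.
  have -> : (size (Kstring sig s k)).+1.-2 = (size (Kstring sig s k)).-1 by lia.
  have -> : (size (Kstring sig s k)).-1.+1 = size (Kstring sig s k) by lia.
  rewrite ltnn eqxx ifT; last lia.
  by rewrite (nth_map 0); last lia.
rewrite (chi_gen V1 V2 V3) (Rset_card V2 V3).
have := vK_runs Hs Hk.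
case E: (vK s k sig) => [|x t]; first by move: (vK_size s k sig); rewrite E.
by rewrite runs_count => -[<-].
Qed.

End Main.

Local Open Scope ring_scope.

Theorem theorem1 (s k : nat -> nat -> nat) :
  (forall sigma i j, (i < j < sigma)%N -> (s sigma i < s sigma j)%N) ->
  (forall sigma i, (i < sigma)%N -> (1 < k sigma i)%N) ->
  forall eps : rat, 0 < eps ->
  exists N : nat, forall sigma : nat, (N <= sigma)%N ->
    `| (chi_of (Kstring sigma (s sigma) (k sigma)))%:R
         / (r_of (Kstring sigma (s sigma) (k sigma)))%:R - 2 | < eps.
Proof.
move=> Hs Hk eps Heps.
exists (Num.bound (2 / eps)).+1 => sig Hsig.
have H0 : (0 < sig)%N by lia.
rewrite (chi_K (Hs sig) (Hk sig) H0) (r_K (Hs sig) (Hk sig) H0).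
set m : rat := (sig.+1)%:R.
have Hm : 0 < m by rewrite /m ltr0n.
have E : (2 * sig)%:R / m - 2 = - (2 / m).
  rewrite /m natrM -addn1 natrD; field.
  by apply: lt0r_neq0; have := ler0n rat sig; lra.
rewrite E normrN ger0_norm; last by rewrite divr_ge0 // ltW.
rewrite ltr_pdivrMr //.
have Hb := archi_boundP (ltW (divr_gt0 (ltr0n _ 2) Heps)).
have Hbm : (Num.bound (2 / eps))%:R < m.
  by rewrite /m ltr_nat; lia.
have : 2 / eps < m by apply: lt_trans Hb Hbm.
by rewrite ltr_pdivrMr // mulrC.
Qed.
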